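(* For every integer $k\geqslant 1$, there exists a finite word $W$ over a $4$-letter alphabet with exactly $k$ distinct reducts, i.e., $r(W)=k$.
   Context: A square is a finite non-empty word of the form $XX$; a word is square-free if it has no square factor. A square reduction replaces a word $UXXV$ (with $X$ non-empty) by $UXV$. A reduct of $W$ is any square-free word obtainable from $W$ by a finite sequence of square reductions, and $r(W)$ is the number of distinct reducts of $W$. *)

(* Defs.v *)
From mathcomp Require Import all_boot.
From Stdlib Require Import Relations.

Set Implicit Arguments.
Unset Strict Implicit.
Unset Printing Implicit Defensive.

Definition has_square (T : Type) (w : seq T) : Prop :=
  exists u x v : seq T, x <> [::] /\ w = u ++ x ++ x ++ v.

Definition square_free (T : Type) (w : seq T) : Prop := ~ has_square w.

Definition square_step (T : Type) (w w' : seq T) : Prop :=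
  exists u x v : seq T, x <> [::] /\ w = u ++ x ++ x ++ v /\ w' = u ++ x ++ v.

Definition reduces (T : Type) : relation (seq T) :=
  clos_refl_trans (seq T) (@square_step T).

Definition reduct (T : Type) (w y : seq T) : Prop :=
  reduces w y /\ square_free y.

Definition num_reducts_eq (T : eqType) (w : seq T) (k : nat) : Prop :=
  exists s : seq (seq T), uniq s /\ size s = k /\
    (forall y : seq T, y \in s <-> reduct w y).

(* Main.v *)
Require Import Defs.
From mathcomp Require Import all_boot.
From Stdlib Require Import Relations.
From mathcomp Require Import all_boot zify.

Set Implicit Arguments.
Unset Strict Implicit.
Unset Printing Implicit Defensive.

(* Construction: W = L d M_1 d ... d M_n d XX where XX = X X is
   a ternary word (from a Thue-Morse coding) whose only square is XX itself. *)

Section Blocks.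
Variable T : eqType.
Variable d : T.

Fixpoint jn (bs : seq (seq T)) : seq T :=
  match bs with
  | [::] => [::]
  | b :: bs' => b ++ (if bs' is [::] then [::] else d :: jn bs')
  end.

Definition jt (bs : seq (seq T)) : seq T := if bs is [::] then [::] else d :: jn bs.

Lemma jn_cons b bs : jn (b :: bs) = b ++ jt bs.
Proof. by []. Qed.

Definition jpre (bs : seq (seq T)) : seq T := if bs is [::] then [::] else jn bs ++ [:: d].

Lemma jn_cat bs1 c cs : jn (bs1 ++ c :: cs) = jpre bs1 ++ jn (c :: cs).
Proof.
elim: bs1 => [|b bs1 IH] //=.
rewrite IH; case: bs1 IH => [|b' bs1] IH /=; by rewrite ?cats0 -!catA //= -?catA.
Qed.

Definition Del (l mid r : seq T) : Prop :=
  exists p s, mid = p ++ s /\ (exists l', l = l' ++ s) /\ (exists r', r = p ++ r').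

Lemma del_step bs1 l mid r bs2 : Del l mid r ->
  square_step (jn (bs1 ++ [:: l, mid, r & bs2])) (jn (bs1 ++ [:: l, r & bs2])).
Proof.
move=> [p [s [-> [[l' ->] [r' ->]]]]].
exists (jpre bs1 ++ l'), (s ++ d :: p), (r' ++ jt bs2); split; first by case: s.
by rewrite !jn_cat /= -!catA /=.
Qed.

Lemma int_step bs1 u x v bs2 : x != [::] ->
  square_step (jn (bs1 ++ (u ++ x ++ x ++ v) :: bs2)) (jn (bs1 ++ (u ++ x ++ v) :: bs2)).
Proof.
move=> xn; exists (jpre bs1 ++ u), x, (v ++ jt bs2); split; first exact/eqP.
by rewrite !jn_cat /= -!catA.
Qed.

Lemma cat_cases (U Z B Z' : seq T) : U ++ Z = B ++ Z' ->
  (exists W, B = U ++ W /\ Z = W ++ Z') \/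
  (exists w W, U = B ++ w :: W /\ Z' = w :: W ++ Z).
Proof.
elim: U B => [|u U IH] [|b B] /=.
- by move=> ->; left; exists [::].
- by move=> ->; left; exists (b :: B).
- by move=> <-; right; exists u, U.
- case=> <- /IH [[W [-> ->]]|[w [W [-> ->]]]]; first by left; exists W.
  by right; exists w, W.
Qed.

Lemma first_d A B C D : d \notin A -> d \notin C -> A ++ d :: B = C ++ d :: D -> A = C /\ B = D.
Proof.
elim: A C => [|a A IH] [|c C] /=.
- by move=> _ _ [->].
- by move=> _ HC [E]; move: HC; rewrite -E inE eqxx.
- by move=> HA _ [E]; move: HA; rewrite E inE eqxx.
- rewrite !inE => /norP [_ HA] /norP [_ HC] [-> /(IH _ HA HC)] [-> ->]; done.
Qed.

Lemma split_first (X : seq T) : d \in X -> exists s Y, X = s ++ d :: Y /\ d \notin s.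
Proof.
elim: X => [|x X IH] //; rewrite inE; case: eqP => [->|Hx] /= H.
- by exists [::], X.
- case: (IH H) => s [Y [-> Hs]]; exists (x :: s), Y; split => //.
  by rewrite inE negb_or Hs andbT; apply/eqP => E; apply: Hx.
Qed.

Definition dfree (b : seq T) := d \notin b.

Lemma jn_head b bs Q R : d \notin Q -> d \notin b -> jn (b :: bs) = Q ++ d :: R ->
  Q = b /\ bs != [::] /\ R = jn bs.
Proof.
rewrite jn_cons; case: bs => [|b' bs] /= HQ Hb.
- rewrite cats0 => E; move: Hb; rewrite E mem_cat inE eqxx orbT //.
- by move=> /esym /first_d => /(_ HQ Hb) [-> <-].
Qed.

Lemma jn_mem bs P Q R : all dfree bs -> d \notin Q ->
  jn bs = P ++ d :: Q ++ d :: R -> Q \in behead bs.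
Proof.
elim: bs P => [|b bs IH] P.
- by move=> _ _ /= /esym /eqP; rewrite -size_eq0 size_cat /= addnS.
move=> /= /andP [Hb Hall] HQ; rewrite -/(jn (b :: bs)) jn_cons => E.
case: (cat_cases E) => [[W [HP HW]]|[w [W [Hb' HZ]]]].
- case: bs IH Hall E HW => [|b' bs] IH Hall E /= HW; first by case: W HP HW.
  case: W HP HW => [|w W] HP /= HW.
  + case: HW => HW; move: Hall => /= /andP [Hb'' _].
    by have [-> _] := jn_head HQ Hb'' HW; rewrite inE eqxx.
  + case: HW => Hw HW; subst w; have := IH W Hall HQ HW => /= H.
    by rewrite inE H orbT.
- case: HZ => Hw _; move: Hb; rewrite /dfree Hb' mem_cat inE -Hw eqxx !orbT //.
Qed.

Lemma jn_prefix b bs Y V : all dfree (b :: bs) -> d \notin Y -> Y ++ V = jn (b :: bs) ->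
  exists b', b = Y ++ b'.
Proof.
move=> /andP [Hb Hall] HY E; rewrite jn_cons in E.
case: (cat_cases E) => [[W [-> _]]|[w [W [HY' HJ]]]]; first by exists W.
case: bs Hall HJ {E} => [|b' bs] //= _ [Hw _]; subst w.
by move: HY; rewrite HY' mem_cat inE eqxx orbT.
Qed.


Lemma key bs U X V : all dfree bs -> uniq bs -> X != [::] -> jn bs = U ++ X ++ X ++ V ->
  (exists bs1 u v bs2, bs = bs1 ++ (u ++ X ++ X ++ v) :: bs2 /\
        U ++ X ++ V = jn (bs1 ++ (u ++ X ++ v) :: bs2))
  \/ (exists bs1 l mid r bs2, bs = bs1 ++ [:: l, mid, r & bs2] /\ Del l mid r /\
        U ++ X ++ V = jn (bs1 ++ [:: l, r & bs2])).
Proof.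
elim: bs U => [|b rest IH] U.
  by move=> _ _ Xn; case: U => [|u U]; case: X Xn => [|x X].
move=> /andP [Hb Hall] /andP [Hnotin Huniq] Xn E; rewrite jn_cons in E.
case: (altP (rest =P [::])) => [Erest|Hne].
  subst rest; left; exists [::], U, V, [::]; rewrite /= cats0 in E *.
  by rewrite -E cats0.
have [r1 [rest' Erest]] : exists r1 rest', rest = r1 :: rest'.
  by case: (rest) Hne => // r1 rest' _; exists r1, rest'.
have Hjt : jt rest = d :: jn rest by rewrite Erest.
rewrite {}Hjt in E.
case: (cat_cases (esym E)) => [[W [HbW HXW]]|[w [W [HU HW]]]].
- have HdW : d \notin W by move: Hb; rewrite /dfree HbW mem_cat negb_or => /andP [].
  case: (boolP (d \in X)) => HdX.
  + have [s [Y [HX Hs]]] := split_first HdX.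
    move: HXW; rewrite {1}HX -catA /= => /(first_d Hs HdW) [Hsw HJ]; subst W.
    case: (boolP (d \in Y)) => HdY.
    * have [Y1 [Y2 [HY HY1]]] := split_first HdY.
      rewrite Erest in Hall Huniq Hnotin HJ *.
      move: HJ; rewrite HX HY -!catA /= -!catA /= => /esym HJ.
      move: Hall => /andP [Hr1 Hall'].
      have [Hr1e [Hrn HJ']] := jn_head HY1 Hr1 HJ.
      have H := jn_mem (P := Y2 ++ s) (R := Y2 ++ V) Hall' HY1.
      rewrite -catA /= in H; have := mem_behead (H (esym HJ')).
      by rewrite Hr1e; move: Huniq => /= /andP [/negP].
    * rewrite Erest in Hall Huniq Hnotin.
      move: Hall => /andP [Hr1 Hall'].
      have HYs : d \notin Y ++ s by rewrite mem_cat negb_or HdY.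
      move: HJ; rewrite Erest HX -catA /= catA => /esym HJ.
      have [Hr1e [Hrn HJ']] := jn_head HYs Hr1 HJ.
      case Erest'': rest' Hrn Hall' HJ' => [|r2 rest''] // _ Hall' HJ'.
      have [r2' Hr2] := jn_prefix Hall' HdY HJ'.
      right; exists [::], b, r1, r2, rest''; split; first by [].
      split; first by exists Y, s; split; [|split; [exists U | exists r2']].
        by rewrite HJ' HbW /= -catA.
  + have HXW' : (X ++ X) ++ V = W ++ d :: jn rest by rewrite -catA.
    case: (cat_cases HXW') => [[W2 [HW2 HV]]|[w [W2 [HXX HD]]]].
    * left; exists [::], U, W2, rest; split; first by rewrite HbW HW2 -!catA.
      by rewrite /= HV Erest /= -!catA.
    * case: HD => Hw _; move: HdX; have : w \in X ++ X by rewrite HXX mem_cat inE eqxx orbT.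
      by rewrite mem_cat orbb -Hw => ->.
- case: HW => Hw HJ; subst w.
  have [[bs1 [u [v [bs2 [Hr Hres]]]]]|[bs1 [l [mid [r [bs2 [Hr [HD Hres]]]]]]]] :=
    IH W Hall Huniq Xn HJ.
  + left; exists (b :: bs1), u, v, bs2; split; first by rewrite Hr.
    by rewrite HU -catA /= Hres; case: bs1 {Hr Hres}.
  + right; exists (b :: bs1), l, mid, r, bs2; split; first by rewrite Hr.
    split => //.
    by rewrite HU -catA /= Hres; case: bs1 {Hr Hres}.
Qed.

End Blocks.

Definition mu (w : seq bool) : seq bool := flatten [seq [:: x; ~~ x] | x <- w].

Lemma size_mu w : size (mu w) = (size w).*2.
Proof. by elim: w => //= x w IH; rewrite IH doubleS. Qed.

Lemma nth_mu_even w k : k < size w -> nth false (mu w) k.*2 = nth false w k.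
Proof. by elim: w k => [|x w IH] [|k] //= H; exact: IH. Qed.

Lemma nth_mu_odd w k : k < size w -> nth false (mu w) k.*2.+1 = ~~ nth false w k.
Proof. by elim: w k => [|x w IH] [|k] //= H; exact: IH. Qed.

Definition overlap (w : seq bool) i p :=
  0 < p /\ i + p.*2 < size w /\ forall k, i <= k <= i + p -> nth false w k = nth false w (k + p).

Lemma mu_aligned w j : j.*2.+1 < size (mu w) -> nth false (mu w) j.*2 != nth false (mu w) j.*2.+1.
Proof.
rewrite size_mu => H; have H' : j < size w by move: H; rewrite -!muln2; lia.
by rewrite nth_mu_even // nth_mu_odd //; case: (nth false w j).
Qed.

Lemma descent w i p : overlap (mu w) i p -> ~~ odd p /\ overlap w i./2 p./2.
Proof.
move=> [p0 [Hs H]].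
have Hsz := size_mu w.
have al : forall j, j.*2.+1 < size (mu w) -> nth false (mu w) j.*2 = ~~ nth false (mu w) j.*2.+1.
  by move=> j /mu_aligned; case: (nth _ _ j.*2); case: (nth _ _ j.*2.+1).
have Hodd : ~~ odd p.
  apply/negP => Hp.
  have alt : forall k, i <= k < i + p.*2 -> nth false (mu w) k = ~~ nth false (mu w) k.+1.
    move=> k /andP [Hik Hk].
    case: (boolP (odd k)) => Hko.
    - case: (leqP (i + p) k) => Hkp.
      + set j := (k - p)./2.
        have E1 : nth false (mu w) j.*2 = nth false (mu w) k.
          by rewrite H; [congr nth; lia | lia].
        have E2 : nth false (mu w) j.*2.+1 = nth false (mu w) k.+1.
          by rewrite H; [congr nth; lia | lia].
        by rewrite -E1 -E2; apply: al; lia.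
      + set j := (k + p)./2.
        have E1 : nth false (mu w) k = nth false (mu w) j.*2.
          by rewrite H; [congr nth; lia | lia].
        have E2 : nth false (mu w) k.+1 = nth false (mu w) j.*2.+1.
          by rewrite H; [congr nth; lia | lia].
        by rewrite E1 E2; apply: al; lia.
    - have -> : k = (k./2).*2 by lia.
      by apply: al; lia.
  have hm : forall m, m <= p -> nth false (mu w) (i + m) = nth false (mu w) i (+) odd m.
    elim=> [|m IHm] Hm; first by rewrite addn0 addbF.
    have A : nth false (mu w) (i + m) = ~~ nth false (mu w) (i + m).+1 by apply: alt; lia.
    rewrite addnS -[nth _ _ (i + m).+1]negbK -A IHm; last by lia.
    by rewrite oddS; case: (nth false (mu w) i); case: (odd m).
  have := hm p (leqnn p); rewrite Hp addbT -(H i); last by lia.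
  by case: (nth false (mu w) i).
split => //.
split; first by lia.
split; first by move: Hs; rewrite Hsz; lia.
move=> k Hk.
case: (boolP (odd i)) => Hi.
- have Hk2 : k < size w by move: Hs; rewrite Hsz; lia.
  have Hk3 : k + p./2 < size w by move: Hs; rewrite Hsz; lia.
  rewrite -[nth false w k]negbK -[nth false w (k + p./2)]negbK.
  rewrite -(nth_mu_odd Hk2) -(nth_mu_odd Hk3).
  have -> : (k + p./2).*2.+1 = k.*2.+1 + p by lia.
  by rewrite -H //; lia.
- have Hk2 : k < size w by move: Hs; rewrite Hsz; lia.
  have Hk3 : k + p./2 < size w by move: Hs; rewrite Hsz; lia.
  rewrite -(nth_mu_even Hk2) -(nth_mu_even Hk3).
  have -> : (k + p./2).*2 = k.*2 + p by lia.
  by rewrite -H //; lia.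
Qed.

Lemma forward w i p : overlap w i p -> overlap (mu w) i.*2 p.*2.
Proof.
move=> [p0 [Hs H]]; have Hsz := size_mu w.
split; first by lia.
split; first by rewrite Hsz; lia.
move=> k Hk.
case: (boolP (odd k)) => Hko.
- have -> : k = (k./2).*2.+1 by lia.
  have -> : (k./2).*2.+1 + p.*2 = (k./2 + p).*2.+1 by lia.
  rewrite !nth_mu_odd; try lia.
  by rewrite H //; lia.
- have -> : k = (k./2).*2 by lia.
  have -> : (k./2).*2 + p.*2 = (k./2 + p).*2 by lia.
  rewrite !nth_mu_even; try lia.
  by rewrite H //; lia.
Qed.

Definition w0 := [:: false; true; true; false; true; true; false].

Lemma size_iter m : size (iter m mu w0) = 7 * 2 ^ m.
Proof. by elim: m => // m IH; rewrite iterS size_mu IH expnS; lia. Qed.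

Lemma iter_overlap m : overlap (iter m mu w0) 0 (3 * 2 ^ m).
Proof.
elim: m => [|m IH].
  split => //; split => // k Hk; have Hk3 : k <= 3 by lia.
  by case: k {Hk} Hk3 => [|[|[|[|k]]]].
rewrite iterS; have := forward IH.
by have -> : (3 * 2 ^ m).*2 = 3 * 2 ^ m.+1 by rewrite expnS; lia.
Qed.

Lemma iter_overlap_inv m i p : overlap (iter m mu w0) i p -> i < 2 ^ m /\ p = 3 * 2 ^ m.
Proof.
elim: m i p => [|m IH] i p.
  move=> [p0 [Hs H]].
  have Hb : all (fun k => nth false w0 k == nth false w0 (k + p)) (iota i p.+1).
    apply/allP => k; rewrite mem_iota => Hk; apply/eqP/H; lia.
  move: Hs Hb p0 => /= Hs; clear H.
  case: p Hs => [|[|[|[|p]]]] Hs //; case: i Hs => [|[|[|[|[|[|[|i]]]]]]] Hs //.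
rewrite iterS => /descent [Hp /IH [Hi Hq]].
rewrite expnS; split; lia.
Qed.

Definition no3 (w : seq bool) := forall k, k.+2 < size w ->
  nth false w k = nth false w k.+1 -> nth false w k.+1 = nth false w k.+2 -> False.

Lemma mu_no3 w : no3 (mu w).
Proof.
move=> k Hk E1 E2.
case: (boolP (odd k)) => Hko.
- have := @mu_aligned w (k.+1)./2; have -> : ((k.+1)./2).*2 = k.+1 by lia.
  by rewrite E2 eqxx => /(_ Hk).
- have := @mu_aligned w k./2; have -> : (k./2).*2 = k by lia.
  by rewrite E1 eqxx => /(_ (ltnW Hk)).
Qed.

Definition zero4 : 'I_4 := @Ordinal 4 0 isT.
Definition one4 : 'I_4 := @Ordinal 4 1 isT.
Definition two4 : 'I_4 := @Ordinal 4 2 isT.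
Definition three4 : 'I_4 := @Ordinal 4 3 isT.

Definition cd (x y : bool) : 'I_4 := if x == y then two4 else if x then one4 else zero4.

Definition code (b : seq bool) : seq 'I_4 :=
  [seq cd (nth false b k) (nth false b k.+1) | k <- iota 0 (size b).-1].

Lemma size_code b : size (code b) = (size b).-1.
Proof. by rewrite size_map size_iota. Qed.

Lemma nth_code x0 b k : k < (size b).-1 -> nth x0 (code b) k = cd (nth false b k) (nth false b k.+1).
Proof. by move=> Hk; rewrite (nth_map 0) ?size_iota // nth_iota. Qed.

Lemma cd_eq1 x y x' y' : cd x y = cd x' y' -> (x == x') = (y == y').
Proof. by case: x; case: y; case: x'; case: y'. Qed.

Lemma cd_eq2 x y x' y' : cd x y = cd x' y' -> x != y -> x = x'.
Proof. by case: x; case: y; case: x'; case: y'. Qed.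

Lemma cd_eq3 x y x' y' : cd x y = cd x' y' -> (x == y) = (x' == y').
Proof. by case: x; case: y; case: x'; case: y'. Qed.

Lemma code_sq b U Y V : no3 b -> Y != [::] -> code b = U ++ Y ++ Y ++ V ->
  overlap b (size U) (size Y).
Proof.
move=> Hn3 HY E.
move Hi0 : (size U) => i; move Hq0 : (size Y) => q.
have q0 : 0 < q by rewrite -Hq0 lt0n size_eq0.
have Hsz : i + q.*2 <= (size b).-1.
  by rewrite -size_code E !size_cat Hi0 Hq0; lia.
have Hc : forall k, i <= k < i + q ->
    cd (nth false b k) (nth false b k.+1) = cd (nth false b (k + q)) (nth false b (k + q).+1).
  move=> k Hk; rewrite -!(nth_code zero4); try lia.
  rewrite E !nth_cat Hi0 Hq0.
  have -> : (k < i) = false by apply/negbTE; rewrite -leqNgt; lia.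
  have -> : (k + q < i) = false by apply/negbTE; rewrite -leqNgt; lia.
  have -> : (k - i < q) by lia.
  have -> : (k + q - i < q) = false by apply/negbTE; rewrite -leqNgt; lia.
  have -> : (k + q - i - q < q) by lia.
  by congr nth; lia.
have Hf : forall m, m <= q ->
    (nth false b (i + m) == nth false b (i + m + q)) = (nth false b i == nth false b (i + q)).
  elim=> [|m IHm] Hm; first by rewrite addn0.
  rewrite -IHm; last by lia.
  have := cd_eq3 (Hc (i + m) ltac:(lia)).
  rewrite addnS -addSn.
  by case: (nth false b (i + m)); case: (nth false b (i + m).+1);
     case: (nth false b (i + m + q)); case: (nth false b (i + m + q).+1).
case: (boolP (nth false b i == nth false b (i + q))) => Hi.
  split => //; split; first by lia.
  move=> k Hk; have := Hf (k - i) ltac:(lia); rewrite Hi.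
  rewrite (_ : i + (k - i) = k); last by lia.
  by move/eqP.
exfalso.
have Hneq : forall k, i <= k < i + q -> nth false b k = nth false b k.+1.
  move=> k Hk; apply/eqP; apply: contraT => Hne.
  have := cd_eq2 (Hc k Hk) Hne => /eqP.
  have := Hf (k - i) ltac:(lia); rewrite (negbTE Hi).
  rewrite (_ : i + (k - i) = k); last by lia.
  by move=> ->.
have E1 := Hneq i ltac:(lia).
have E2 : nth false b i.+1 = nth false b i.+2.
  case: (ltnP 1 q) => Hq.
    by apply: Hneq; lia.
  have Hq1 : q = 1 by lia.
  have := cd_eq3 (Hc i ltac:(lia)); rewrite E1 eqxx Hq1 addn1 => /esym /eqP.
  done.
by apply: (Hn3 i) => //; lia.
Qed.

Lemma overlap_take N s i p : overlap (take N s) i p -> overlap s i p.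
Proof.
move=> [p0 [Hs H]]; rewrite size_take in Hs.
split => //; split; first by move: Hs; case: (ltnP N (size s)) => ?; lia.
move=> k Hk; have := H k Hk; rewrite !nth_take //; move: Hs; case: (ltnP N (size s)) => ?; lia.
Qed.

Lemma no3_take N s : no3 s -> no3 (take N s).
Proof.
move=> H k Hk; rewrite size_take in Hk; rewrite !nth_take; try (move: Hk; case: (ltnP N (size s)) => ?; lia).
apply: H; move: Hk; case: (ltnP N (size s)) => ?; lia.
Qed.

Lemma exists_XX n : exists XX : seq 'I_4, exists Lx, n < Lx /\ 1 < Lx /\ size XX = Lx.*2 /\
  XX = take Lx XX ++ take Lx XX /\ three4 \notin XX /\
  (forall U Y V, Y != [::] -> XX = U ++ Y ++ Y ++ V -> U = [::] /\ V = [::]).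
Proof.
pose m := n.+1; pose Lx := 3 * 2 ^ m.
pose beta := iter m mu w0; pose B := take (Lx.*2.+1) beta.
have Hbeta : size beta = 7 * 2 ^ m by rewrite size_iter.
have HB : size B = Lx.*2.+1 by rewrite size_take Hbeta /Lx; case: (ltnP _ (7 * 2 ^ m)) => ?; lia.
have HnL : n < Lx.
  have := ltn_expl n (ltnSn 1); rewrite /Lx /m expnS; lia.
have HL1 : 1 < Lx by rewrite /Lx /m expnS; have := expn_gt0 2 n; lia.
have Hsz : size (code B) = Lx.*2 by rewrite size_code HB.
have [_ [_ Hper]] := iter_overlap m; rewrite add0n -/Lx -/beta in Hper.
exists (code B), Lx; split => //; split => //; split => //.
split.
  apply: (@eq_from_nth _ zero4); first by rewrite size_cat size_take Hsz; case: (ltnP Lx (Lx.*2)) => ?; lia.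
  move=> k; rewrite Hsz => Hk.
  rewrite nth_cat size_take Hsz; case: (ltnP Lx (Lx.*2)) => ?; last by lia.
  case: ifP => Hk1; first by rewrite nth_take.
  rewrite nth_take; last by lia.
  rewrite !nth_code ?HB; try lia.
  rewrite !nth_take; try lia.
  have Hk2 : Lx <= k by rewrite leqNgt Hk1.
  rewrite (Hper (k - Lx)); last by lia.
  rewrite (Hper (k - Lx).+1); last by lia.
  by congr cd; congr nth; lia.
split.
  apply/negP => /mapP [k _]; rewrite /cd.
  by case: (nth false B k); case: (nth false B k.+1).
move=> U Y V HY E.
have Hn3 : no3 B by apply: no3_take; rewrite /beta /m iterS; apply: mu_no3.
have /overlap_take /iter_overlap_inv [HU HYs] := code_sq Hn3 HY E.
have := congr1 size E; rewrite Hsz !size_cat HYs /Lx => Hs.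
split; [case: U {E HU} Hs => // u U' /= Hs | case: V {E} Hs => // v V' /= Hs]; move: Hs; move: (2 ^ m) => t; rewrite ?addnS; lia.
Qed.

Section Game.
Variable XX : seq 'I_4.
Variables Lx n : nat.
Hypothesis HnL : n < Lx.
Hypothesis HL1 : 1 < Lx.
Hypothesis Hsz : size XX = Lx.*2.
Hypothesis Hper : XX = take Lx XX ++ take Lx XX.
Hypothesis Hd : three4 \notin XX.
Hypothesis Huq : forall U Y V, Y != [::] -> XX = U ++ Y ++ Y ++ V -> U = [::] /\ V = [::].

Local Notation d := three4.
Local Notation jn := (jn three4).
Local Notation Del := (Del (T := 'I_4)).

Definition X := take Lx XX.
Definition Ms := [seq take (Lx + n - i) XX | i <- iota 0 n].
Definition Lb := [:: nth zero4 X n].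
Definition st j (Z : seq 'I_4) := Lb :: take j Ms ++ [:: Z].

Lemma size_X : size X = Lx.
Proof. by rewrite /X size_take Hsz; case: (ltnP Lx Lx.*2) => ?; lia. Qed.

Lemma nth_Ms i : i < n -> nth [::] Ms i = take (Lx + n - i) XX.
Proof. by move=> Hi; rewrite (nth_map 0) ?size_iota // nth_iota. Qed.

Lemma size_Ms : size Ms = n.
Proof. by rewrite size_map size_iota. Qed.

Lemma size_take_XX k : k <= Lx.*2 -> size (take k XX) = k.
Proof. by move=> Hk; rewrite size_take Hsz; case: (ltnP k Lx.*2) => ?; lia. Qed.

Lemma nth_XX k : Lx <= k < Lx.*2 -> nth zero4 XX k = nth zero4 X (k - Lx).
Proof.
move=> Hk; rewrite {1}Hper nth_cat -/X size_X.
by have -> : (k < Lx) = false by apply/negbTE; rewrite -leqNgt; lia.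
Qed.

Lemma adj_X k : k.+1 < Lx -> nth zero4 X k != nth zero4 X k.+1.
Proof.
move=> Hk; apply/negP => /eqP E.
have HXX : XX = take k XX ++ [:: nth zero4 XX k] ++ [:: nth zero4 XX k] ++ drop k.+2 XX.
  rewrite -{1}(cat_take_drop k XX) (drop_nth zero4); last by rewrite Hsz; lia.
  rewrite (drop_nth zero4); last by rewrite Hsz; lia.
  have E' : nth zero4 XX k.+1 = nth zero4 XX k.
    have Hk0 : k < Lx by lia.
    by rewrite Hper !nth_cat -/X size_X Hk0 Hk E.
  by rewrite E'.
have [HU HV] := Huq (Y := [:: nth zero4 XX k]) isT HXX.
have := congr1 size HXX; rewrite HU HV /= Hsz; lia.
Qed.


Lemma last_Ms i : i < n -> last zero4 (nth [::] Ms i) = nth zero4 X (n - i).-1.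
Proof.
move=> Hi; rewrite nth_Ms // -nth_last size_take_XX; last by lia.
rewrite nth_take; last by lia.
by rewrite nth_XX; [congr nth; lia | lia].
Qed.

Lemma size_nth_Ms i : i < n -> size (nth [::] Ms i) = Lx + n - i.
Proof. by move=> Hi; rewrite nth_Ms // size_take_XX; lia. Qed.

Lemma size_st j Z : j <= n -> size (st j Z) = j.+2.
Proof. by move=> Hj; rewrite /st /= size_cat size_take size_Ms /=; case: (ltnP j n) => ?; lia. Qed.

Lemma nth_st0 j Z : nth [::] (st j Z) 0 = Lb.
Proof. by []. Qed.

Lemma nth_stS j Z t : t < j -> j <= n -> nth [::] (st j Z) t.+1 = nth [::] Ms t.
Proof.
move=> Ht Hj; rewrite /st /= nth_cat size_take size_Ms.
have -> : t < (if j < n then j else n) by case: (ltnP j n) => ?; lia.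
by rewrite nth_take.
Qed.

Lemma nth_stL j Z : j <= n -> nth [::] (st j Z) j.+1 = Z.
Proof.
move=> Hj; rewrite /st /= nth_cat size_take size_Ms.
have -> : (if j < n then j else n) = j by case: (ltnP j n) => ?; lia.
by rewrite ltnn subnn.
Qed.

Lemma no_del (l mid r : seq 'I_4) : last zero4 l != last zero4 mid -> size r < size mid -> ~ Del l mid r.
Proof.
move=> Hl Hs [p [s [Em [[l' El] [r' Er]]]]].
case: s Em El => [|s1 s'] Em El.
  by move: Hs; rewrite Er Em cats0 size_cat; lia.
by move: Hl; rewrite El Em !last_cat /= eqxx.
Qed.

Lemma nth_mid (A : Type) (x0 : A) bs1 s t : nth x0 (bs1 ++ s) (size bs1 + t) = nth x0 s t.
Proof. by rewrite nth_cat ltnNge leq_addr /= addKn. Qed.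

Lemma del_st j Z bs1 l mid r bs2 : j <= n -> (Z = XX \/ Z = X) ->
  st j Z = bs1 ++ [:: l, mid, r & bs2] -> Del l mid r ->
  Z = XX /\ 0 < j /\ bs1 ++ [:: l, r & bs2] = st j.-1 XX.
Proof.
move=> Hj HZ E HD.
move Hi : (size bs1) => i.
have Hsz2 : i.+3 + size bs2 = j.+2.
  by rewrite -(size_st Z Hj) E size_cat /= Hi; lia.
have Hij : i < j by lia.
have El : nth [::] (st j Z) i = l by rewrite E -Hi -[size bs1]addn0 nth_mid.
have Em : nth [::] (st j Z) i.+1 = mid by rewrite E -Hi (_ : (size bs1).+1 = size bs1 + 1) ?nth_mid // addn1.
have Er : nth [::] (st j Z) i.+2 = r by rewrite E -Hi (_ : (size bs1).+2 = size bs1 + 2) ?nth_mid // addn2.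
have Hmid : mid = nth [::] Ms i by rewrite -Em nth_stS.
have Hlast : last zero4 l != last zero4 mid.
  rewrite Hmid last_Ms; last by lia.
  have -> : last zero4 l = nth zero4 X (n - i).
    case: i Hi Hij El {Em Er Hmid Hsz2} => [|i] Hi Hij El.
      by rewrite -El nth_st0 subn0.
    rewrite -El nth_stS; [|lia|lia]; rewrite last_Ms; last by lia.
    by congr nth; lia.
  rewrite eq_sym; have := @adj_X (n - i).-1; have -> : (n - i).-1.+1 = n - i by lia.
  by apply; lia.
have Hsmid : size mid = Lx + n - i by rewrite Hmid size_nth_Ms //; lia.
case: (ltnP i.+1 j) => Hij2.
  exfalso; apply: (no_del Hlast) HD.
  by rewrite -Er nth_stS // size_nth_Ms; lia.
have Hj1 : j = i.+1 by lia.
have HrZ : r = Z.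
  by move: Er; rewrite (_ : i.+2 = j.+1); [rewrite nth_stL // => <- | lia].
case: HZ => HZ; last first.
  exfalso; apply: (no_del Hlast) HD.
  by rewrite HrZ HZ Hsmid size_X; lia.
have Hbs2 : bs2 = [::] by move: Hsz2; case: (bs2) => // ? ? /=; lia.
split => //; split; first by lia.
have T1 : take i.+1 (st j Z) = bs1 ++ [:: l].
  by rewrite E take_cat Hi ltnNge leqnSn /= subSnn.
have T2 : take i.+1 (st j Z) = Lb :: take i Ms.
  rewrite /st /= take_cat size_take size_Ms.
  have -> : i < (if j < n then j else n) by case: (ltnP j n) => ?; lia.
  by rewrite take_takel //; lia.
rewrite Hbs2 HrZ HZ Hj1 /= /st.
by rewrite (_ : Lb :: take i Ms ++ [:: XX] = (Lb :: take i Ms) ++ [:: XX]) // -T2 T1 -catA.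
Qed.


Lemma mem_st j Z b : b \in st j Z ->
  b = Lb \/ (exists k, Lx < k < Lx.*2 /\ b = take k XX) \/ b = Z.
Proof.
rewrite /st inE mem_cat mem_seq1 => /orP [/eqP ->|/orP [H|/eqP ->]]; [by left| |by right; right].
right; left; move: (mem_take H) => /mapP [i]; rewrite mem_iota => Hi ->.
by exists (Lx + n - i); split => //; lia.
Qed.

Lemma sub_st j Z b : (Z = XX \/ Z = X) -> b \in st j Z -> {subset b <= XX}.
Proof.
move=> HZ /mem_st [->|[[k [_ ->]]|->]] x.
- rewrite mem_seq1 => /eqP ->; apply: (@mem_take Lx).
  by rewrite -/X mem_nth // size_X.
- by move/mem_take.
- by case: HZ => -> //; move/mem_take.
Qed.

Lemma dfree_st j Z : (Z = XX \/ Z = X) -> all (dfree three4) (st j Z).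
Proof.
move=> HZ; apply/allP => b Hb; rewrite /dfree; apply/negP => /(sub_st HZ Hb).
by move: Hd => /negP.
Qed.

Lemma map_size_st j Z : j <= n ->
  map size (st j Z) = 1 :: [seq Lx + n - i | i <- iota 0 j] ++ [:: size Z].
Proof.
move=> Hj; rewrite /st /= map_cat map_take /Ms -map_comp.
have -> : map (size \o (fun i => take (Lx + n - i) XX)) (iota 0 n) = map (fun i => Lx + n - i) (iota 0 n).
  by apply/eq_in_map => i; rewrite mem_iota => Hi /=; rewrite size_take_XX //; lia.
by rewrite -map_take take_iota; have -> : minn j n = j by lia.
Qed.

Lemma uniq_st j Z : j <= n -> (Z = XX \/ Z = X) -> uniq (st j Z).
Proof.
move=> Hj HZ; apply: (@map_uniq _ _ size); rewrite map_size_st //.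
have HsZ : size Z = Lx.*2 \/ size Z = Lx by case: HZ => ->; [left | right; rewrite size_X].
have Hmem : forall x, x \in [seq Lx + n - i | i <- iota 0 j] -> Lx < x <= Lx + n.
  by move=> x /mapP [i]; rewrite mem_iota => Hi ->; lia.
rewrite /= cat_uniq /= andbT; apply/and3P; split.
- rewrite mem_cat mem_seq1 negb_or; apply/andP; split.
    by apply/negP => /Hmem; lia.
  by case: HsZ => ->; lia.
- rewrite map_inj_in_uniq ?iota_uniq //.
  by move=> a b; rewrite !mem_iota => Ha Hb; lia.
- rewrite orbF; apply/negP => /Hmem.
  by case: HsZ => ->; lia.
Qed.


Lemma last_pos (A : eqType) (pre bs1 bs2 : seq A) x :
  pre ++ [:: x] = bs1 ++ x :: bs2 -> x \notin pre -> bs1 = pre /\ bs2 = [::].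
Proof.
case/lastP: bs2 => [|bs2' z].
  by rewrite !cats1 => /rcons_inj [->].
rewrite cats1 -rcons_cons -rcons_cat => /rcons_inj [-> _].
by rewrite mem_cat inE eqxx orbT.
Qed.

Lemma step_st j Z y : j <= n -> (Z = XX \/ Z = X) -> square_step (jn (st j Z)) y ->
  Z = XX /\ ((0 < j /\ y = jn (st j.-1 XX)) \/ y = jn (st j X)).
Proof.
move=> Hj HZ [U [Y [V [HY [E ->]]]]].
have HY' : Y != [::] by apply/eqP.
case: (key (dfree_st j HZ) (uniq_st Hj HZ) HY' E) =>
  [[bs1 [u [v [bs2 [Hst Hres]]]]]|[bs1 [l [mid [r [bs2 [Hst [HD Hres]]]]]]]]; last first.
  have [HZ' [Hj0 Hr]] := del_st Hj HZ Hst HD.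
  by split => //; left; split => //; rewrite Hres Hr.
have Hb : u ++ Y ++ Y ++ v \in st j Z by rewrite Hst mem_cat inE eqxx orbT.
have Hsq : forall k, k <= Lx.*2 -> take k XX = u ++ Y ++ Y ++ v -> k = Lx.*2 /\ u = [::] /\ v = [::].
  move=> k Hk Ek.
  have E2 : XX = u ++ Y ++ Y ++ (v ++ drop k XX) by rewrite -{1}(cat_take_drop k XX) Ek -!catA.
  have [Hu Hv] := Huq HY' E2.
  have Hv' : v = [::] by case: (v) Hv.
  have Hdr : drop k XX = [::] by rewrite Hv' in Hv.
  have := congr1 size Hdr; rewrite size_drop Hsz /= => H0.
  by split => //; lia.
case: (mem_st Hb) => [HbL|[[k [Hk Hbk]]|HbZ]].
- exfalso; move: (congr1 size HbL); rewrite /Lb !size_cat /=.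
  by case: (Y) HY' => // ? ? _ /=; lia.
- by exfalso; have [] := Hsq k ltac:(lia) (esym Hbk); lia.
- have HZX : Z = XX.
    case: HZ => // HZ; exfalso; move: HbZ; rewrite HZ /X => /esym /Hsq [] //; lia.
  have [_ [Hu Hv]] := Hsq (Lx.*2) (leqnn _) ltac:(by rewrite -Hsz take_size HbZ HZX).
  subst u v; rewrite /= cats0 in HbZ.
  have HYX : Y = X.
    have Hs2 := congr1 size HbZ; rewrite HZX Hsz size_cat in Hs2.
    by rewrite /X -HZX -HbZ take_size_cat //; lia.
  split => //; right.
  have Hun := uniq_st Hj (or_introl erefl : XX = XX \/ XX = X).
  have Hst' : (Lb :: take j Ms) ++ [:: XX] = bs1 ++ XX :: bs2.
    by move: Hst; rewrite /= cats0 HbZ HZX => <-.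
  have Hnotin : XX \notin Lb :: take j Ms.
    by move: Hun; rewrite /st -cat_cons cat_uniq /= orbF andbT => /andP [].
  have [Hb1 Hb2] := last_pos Hst' Hnotin.
  by rewrite Hres Hb1 Hb2 /= cats0 HYX.
Qed.


Lemma st_rcons j Z : j < n -> st j.+1 Z = (Lb :: take j Ms) ++ [:: nth [::] Ms j; Z].
Proof. by move=> Hj; rewrite /st (take_nth [::]) ?size_Ms // -cats1 -catA. Qed.

Lemma step_down j : j < n -> square_step (jn (st j.+1 XX)) (jn (st j XX)).
Proof.
move=> Hj; rewrite st_rcons // lastI cat_rcons.
have -> : st j XX = belast Lb (take j Ms) ++ [:: last Lb (take j Ms); XX].
  by rewrite /st -cat_cons lastI cat_rcons.
apply: del_step.
exists (nth [::] Ms j), [::]; split; first by rewrite cats0.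
split; first by exists (last Lb (take j Ms)); rewrite cats0.
by rewrite nth_Ms //; exists (drop (Lx + n - j) XX); rewrite cat_take_drop.
Qed.

Lemma collapse j : square_step (jn (st j XX)) (jn (st j X)).
Proof.
have := @int_step _ three4 (Lb :: take j Ms) [::] X [::] [::].
rewrite /st -!cat_cons /= !cats0 -Hper => H; apply: H.
by rewrite -size_eq0 size_X; lia.
Qed.

Lemma reach j : j <= n -> reduces (jn (st n XX)) (jn (st j XX)).
Proof.
move=> Hj; have -> : j = n - (n - j) by lia.
elim: (n - j) (leq_subr j n) => [|k IH] Hk; first by rewrite subn0; apply: rt_refl.
apply: rt_trans (IH (ltnW Hk)) _; apply: rt_step.
have -> : n - k = (n - k.+1).+1 by lia.
by apply: step_down; lia.
Qed.

Lemma inv x y : reduces x y ->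
  (exists j, j <= n /\ (x = jn (st j XX) \/ x = jn (st j X))) ->
  (exists j, j <= n /\ (y = jn (st j XX) \/ y = jn (st j X))).
Proof.
elim=> {x y} [x y Hs|x|x y z _ IH1 _ IH2]; last by move=> /IH1 /IH2.
- move=> [j [Hj Hx]].
  have HZ : exists Z, (Z = XX \/ Z = X) /\ x = jn (st j Z).
    by case: Hx => ->; [exists XX; split; [left|] | exists X; split; [right|]].
  case: HZ => Z [HZ Ex]; rewrite Ex in Hs.
  have [_ [[Hj0 ->]|->]] := step_st Hj HZ Hs.
    by exists j.-1; split; [lia | left].
  by exists j; split => //; right.
- by [].
Qed.

Lemma sqf_st j : j <= n -> square_free (jn (st j X)).
Proof.
move=> Hj [U [Y [V [HY E]]]].
have Hs : square_step (jn (st j X)) (U ++ Y ++ V) by exists U, Y, V.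
have [HXX _] := step_st Hj (or_intror erefl) Hs.
have := congr1 size HXX; rewrite size_X Hsz; lia.
Qed.

Lemma not_sqf_st j : ~ square_free (jn (st j XX)).
Proof.
apply; exists (jpre three4 (Lb :: take j Ms)), X, [::]; split.
  by apply/eqP; rewrite -size_eq0 size_X; lia.
rewrite /st -cat_cons jn_cat /=.
have E : X ++ X = XX by rewrite /X -Hper.
by rewrite (cats0 X) E cats0.
Qed.

Lemma size_step j Z : j < n -> size (jn (st j.+1 Z)) = size (jn (st j Z)) + size (nth [::] Ms j) + 1.
Proof.
move=> Hj; rewrite st_rcons // jn_cat /st -cat_cons jn_cat /= !size_cat /= cats0; lia.
Qed.

Lemma size_mono a b : a < b -> b <= n -> size (jn (st a X)) < size (jn (st b X)).
Proof.
move=> Hab; elim: b Hab => [|b IH] //; rewrite ltnS leq_eqVlt => /orP [/eqP <-|Hab] Hb.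
  by rewrite size_step; lia.
rewrite size_step; last by lia.
have := IH Hab ltac:(lia); lia.
Qed.

Lemma count_reducts : num_reducts_eq (jn (st n XX)) n.+1.
Proof.
exists [seq jn (st j X) | j <- iota 0 n.+1]; split.
  rewrite map_inj_in_uniq ?iota_uniq // => a b; rewrite !mem_iota !add0n => Ha Hb E.
  case: (ltngtP a b) => // H.
    by have := size_mono H ltac:(lia); rewrite E ltnn.
  by have := size_mono H ltac:(lia); rewrite E ltnn.
split; first by rewrite size_map size_iota.
move=> y; split.
  move=> /mapP [j]; rewrite mem_iota /= => Hj ->; split; last by apply: sqf_st; lia.
  apply: rt_trans (reach _) (rt_step _ _ _ _ (collapse j)); lia.
move=> [Hr Hsf].
have [j [Hj [Ey|Ey]]] := inv Hr (ex_intro _ n (conj (leqnn n) (or_introl erefl))).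
  by rewrite Ey in Hsf; case: (not_sqf_st Hsf).
by apply/mapP; exists j => //; rewrite mem_iota.
Qed.

End Game.

Theorem theorem2p7 :
  forall k : nat, 1 <= k ->
    exists W : seq 'I_4, num_reducts_eq W k.
Proof.
move=> k Hk.
have [XX [Lx [HnL [HL1 [Hsz [Hper [Hd Huq]]]]]]] := exists_XX k.-1.
exists (jn three4 (st XX Lx k.-1 k.-1 XX)).
have := count_reducts HnL HL1 Hsz Hper Hd Huq.
by rewrite prednK.
Qed.
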